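(* For $0<\Delta<2$ let $\gamma_1(\theta)=(\cos\theta,\sin\theta,0)$ and $\gamma_2(\phi)=(\cos\phi+\Delta,0,\sin\phi)$, $\theta,\phi\in[0,2\pi)$; these two unit circles form a Hopf link. Their Möbius cross-energy $$E_c(\Delta)=2\int_0^{2\pi}\!\!\int_0^{2\pi}\frac{d\theta\,d\phi}{(\cos\theta+\Delta-\cos\phi)^2+\sin^2\phi+\sin^2\theta}$$ satisfies $$E_c(\Delta)=\frac{16\pi}{4-\Delta^2}\,K\!\left(-\frac{8(\Delta^2-2)}{(\Delta^2-4)^2}\right),$$ where $K(m)=\int_0^{\pi/2}(1-m\sin^2 t)^{-1/2}\,dt$ (the argument is $<1$ for all $\Delta\in(0,2)$). Moreover, $E_c$ attains its minimum over $(0,2)$ at $\Delta=\sqrt2$, with $E_c(\sqrt2)=4\pi^2$.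
   Context: The Möbius cross-energy of two disjoint closed curves $\gamma_i,\gamma_j$ in $\mathbb R^3$ is taken with the convention that each pair of line elements is counted twice: $E_c=2\int\int \frac{|\dot\gamma_i(u)||\dot\gamma_j(v)|}{|\gamma_i(u)-\gamma_j(v)|^2}\,du\,dv$. The integral displayed in the claim is this quantity for the two curves given. *)

(* Defs.v *)
From Stdlib Require Import Reals.
From Coquelicot Require Import Coquelicot.
Open Scope R_scope.

Definition gamma1 (t : R) : R * R * R := (cos t, sin t, 0).
Definition gamma2 (D p : R) : R * R * R := (cos p + D, 0, sin p).
Definition sqdist3 (u v : R * R * R) : R :=
  let '(a1, a2, a3) := u in let '(b1, b2, b3) := v in
  (a1 - b1) ^ 2 + (a2 - b2) ^ 2 + (a3 - b3) ^ 2.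

(* Moebius cross-energy of the link (each pair of line elements counted
   twice); both parametrizations have unit speed. *)
Definition Ec (D : R) : R :=
  2 * RInt (fun t => RInt (fun p => / sqdist3 (gamma1 t) (gamma2 D p)) 0 (2 * PI))
           0 (2 * PI).

Definition EllK (m : R) : R :=
  RInt (fun t => / sqrt (1 - m * (sin t) ^ 2)) 0 (PI / 2).

(* Main.v *)
Require Import Defs.
From Stdlib Require Import Reals Lra Psatz.
From Coquelicot Require Import Coquelicot.
Open Scope R_scope.

Definition mob (r t : R) := t + 2 * atan (r * sin t / (1 - r * cos t)).
Definition dmob (r t : R) := (1 - r ^ 2) / (1 - 2 * r * cos t + r ^ 2).

Lemma den1_pos r t : -1 < r < 1 -> 0 < 1 - r * cos t.
Proof.
  intros Hr. pose proof (COS_bound t).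
  destruct (Rle_dec 0 r).
  - assert (0 <= r * (1 - cos t)) by (apply Rmult_le_pos; lra). nra.
  - assert (0 <= (- r) * (1 + cos t)) by (apply Rmult_le_pos; lra). nra.
Qed.

Lemma den2_pos r t : -1 < r < 1 -> 0 < 1 - 2 * r * cos t + r ^ 2.
Proof.
  intros Hr. pose proof (den1_pos r t Hr). pose proof (sin2_cos2 t).
  unfold Rsqr in *. nra.
Qed.

Lemma mob_derive r t : -1 < r < 1 -> is_derive (mob r) t (dmob r t).
Proof.
  intros Hr. pose proof (den1_pos r t Hr). pose proof (den2_pos r t Hr).
  pose proof (sin2_cos2 t). unfold Rsqr in *.
  unfold mob, dmob. auto_derive.
  - lra.
  - field_simplify; try lra.
    + assert (Hs: sin t ^ 2 = 1 - cos t ^ 2) by nra. rewrite Hs.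
      field. nra.
    + split; nra.
Qed.

Lemma mob_0 r : mob r 0 = 0.
Proof. unfold mob. rewrite sin_0, Rmult_0_r, Rdiv_0_l, atan_0. ring. Qed.

Lemma mob_2PI r : mob r (2 * PI) = 2 * PI.
Proof. unfold mob. rewrite sin_2PI, Rmult_0_r, Rdiv_0_l, atan_0. ring. Qed.

Lemma dmob_cont r t : -1 < r < 1 -> continuous (dmob r) t.
Proof.
  intros Hr. pose proof (den2_pos r t Hr).
  apply (ex_derive_continuous (dmob r)). unfold dmob. auto_derive. lra.
Qed.


Lemma poisson A B : -A < B < A ->
  is_RInt (fun p => / (A - B * cos p)) 0 (2 * PI) (2 * PI / sqrt (A ^ 2 - B ^ 2)).
Proof.
  intros HAB.
  assert (HApos : 0 < A) by lra.
  assert (Hd : 0 < A ^ 2 - B ^ 2) by nra.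
  set (S := sqrt (A ^ 2 - B ^ 2)).
  assert (HS : 0 < S) by (apply sqrt_lt_R0; exact Hd).
  assert (HS2 : S * S = A ^ 2 - B ^ 2) by (apply sqrt_sqrt; lra).
  set (rho := B / (A + S)).
  assert (Hrho : -1 < rho < 1).
  { unfold rho. split.
    - apply Rmult_lt_reg_r with (A + S); [lra|]. field_simplify; lra.
    - apply Rmult_lt_reg_r with (A + S); [lra|]. field_simplify; lra. }
  assert (H1 : (A + S) ^ 2 - B ^ 2 = 2 * S * (A + S)) by nra.
  assert (H2 : (A + S) ^ 2 + B ^ 2 = 2 * A * (A + S)) by nra.
  assert (Hval : forall x, / S * dmob rho x = / (A - B * cos x)).
  { intros x. pose proof (COS_bound x).
    assert (HAc : 0 < A - B * cos x).
    { destruct (Rle_dec 0 B).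
      - assert (0 <= B * (1 - cos x)) by (apply Rmult_le_pos; lra). nra.
      - assert (0 <= (- B) * (1 + cos x)) by (apply Rmult_le_pos; lra). nra. }
    pose proof (den2_pos rho x Hrho).
    unfold dmob.
    assert (E : (1 - rho ^ 2) / (1 - 2 * rho * cos x + rho ^ 2) =
              ((A + S) ^ 2 - B ^ 2) / ((A + S) ^ 2 + B ^ 2 - 2 * B * (A + S) * cos x)).
    { unfold rho in *. field. split; [|lra].
      intro Hz. assert (Hz' : ((A + S) ^ 2 + B ^ 2 - 2 * B * (A + S) * cos x) / (A + S) ^ 2 = 0)
        by (rewrite Hz; field; lra).
      replace (((A + S) ^ 2 + B ^ 2 - 2 * B * (A + S) * cos x) / (A + S) ^ 2)
        with (1 - 2 * (B / (A + S)) * cos x + (B / (A + S)) ^ 2) in Hz' by (field; lra).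
      lra. }
    rewrite E, H1, H2. field. split; [lra|]. split; [|lra].
    intro Hz. nra. }
  replace (2 * PI / S) with (minus ((fun p => / S * mob rho p) (2 * PI)) ((fun p => / S * mob rho p) 0)).
  2:{ simpl. rewrite mob_2PI, mob_0. unfold minus, plus, opp; simpl. field. lra. }
  apply (is_RInt_derive (fun p => / S * mob rho p) (fun p => / (A - B * cos p))).
  - intros x _. rewrite <- Hval. apply is_derive_scal. apply mob_derive. exact Hrho.
  - intros x _.
    apply continuous_ext with (fun x => / S * dmob rho x). { intros; apply Hval. }
    apply (ex_derive_continuous (fun x => / S * dmob rho x)).
    pose proof (den2_pos rho x Hrho). unfold dmob. auto_derive. lra.
Qed.

Lemma cos_mob r t : -1 < r < 1 ->
  cos (mob r t) =
  (cos t * ((1 - r * cos t) ^ 2 - r ^ 2 * (1 - cos t ^ 2)) - 2 * r * (1 - cos t ^ 2) * (1 - r * cos t))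
  / (1 - 2 * r * cos t + r ^ 2).
Proof.
  intros Hr. pose proof (den1_pos r t Hr). pose proof (den2_pos r t Hr).
  pose proof (sin2_cos2 t) as Hsc. unfold Rsqr in Hsc.
  unfold mob. set (u := r * sin t / (1 - r * cos t)).
  rewrite cos_plus, cos_2a, sin_2a, cos_atan, sin_atan.
  assert (Hq : sqrt (1 + u²) * sqrt (1 + u²) = 1 + u²) by (apply sqrt_sqrt; unfold Rsqr; nra).
  assert (Hqp : 0 < sqrt (1 + u²)) by (apply sqrt_lt_R0; unfold Rsqr; nra).
  replace (cos t * (1 / sqrt (1 + u²) * (1 / sqrt (1 + u²)) - u / sqrt (1 + u²) * (u / sqrt (1 + u²))) -
     sin t * (2 * (u / sqrt (1 + u²)) * (1 / sqrt (1 + u²))))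
    with ((cos t * (1 - u ^ 2) - 2 * sin t * u) / (sqrt (1 + u²) * sqrt (1 + u²)))
    by (field; lra).
  rewrite Hq. unfold Rsqr.
  assert (Hs : sin t ^ 2 = 1 - cos t ^ 2) by nra.
  assert (E1 : 1 + u * u = (1 - 2 * r * cos t + r ^ 2) / (1 - r * cos t) ^ 2).
  { unfold u. field_simplify; [|lra|lra]. rewrite Hs. field. nra. }
  assert (E2 : cos t * (1 - u ^ 2) - 2 * sin t * u =
     (cos t * ((1 - r * cos t) ^ 2 - r ^ 2 * (1 - cos t ^ 2)) - 2 * r * (1 - cos t ^ 2) * (1 - r * cos t))
      / (1 - r * cos t) ^ 2).
  { unfold u. field_simplify; [|lra|lra]. rewrite Hs. field. nra. }
  rewrite E1, E2. field. lra.
Qed.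

Definition Y (s x : R) := 4 + s ^ 2 - 4 * s * cos x.
Definition G (s : R) := RInt (fun x => / sqrt (Y s x)) 0 (2 * PI).

Lemma Y_pos s x : -2 < s < 2 -> 0 < Y s x.
Proof.
  intros Hs. unfold Y. pose proof (COS_bound x).
  destruct (Rle_dec 0 s).
  - assert (0 <= s * (1 - cos x)) by (apply Rmult_le_pos; lra). nra.
  - assert (0 <= (- s) * (1 + cos x)) by (apply Rmult_le_pos; lra). nra.
Qed.

Lemma g_cont s x : -2 < s < 2 -> continuous (fun x => / sqrt (Y s x)) x.
Proof.
  intros Hs. pose proof (Y_pos s x Hs).
  apply (ex_derive_continuous (fun x => / sqrt (Y s x))). unfold Y in *.
  auto_derive. split; [nra|]. split; [|exact I].
  apply Rgt_not_eq. apply sqrt_lt_R0. nra.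
Qed.

Lemma g_exRInt s a b : -2 < s < 2 -> ex_RInt (fun x => / sqrt (Y s x)) a b.
Proof. intros Hs. apply (ex_RInt_continuous (V := R_CompleteNormedModule)). intros; apply g_cont; auto. Qed.

Lemma G_ge s : -2 < s < 2 -> PI <= G s.
Proof.
  intros Hs.
  assert (HP : is_RInt (fun x => (2 - s * cos x) / Y s x) 0 (2 * PI) PI).
  { assert (Hp := poisson (4 + s ^ 2) (4 * s)).
    assert (Hq : sqrt ((4 + s ^ 2) ^ 2 - (4 * s) ^ 2) = 4 - s ^ 2).
    { replace ((4 + s ^ 2) ^ 2 - (4 * s) ^ 2) with ((4 - s ^ 2) ^ 2) by ring.
      apply sqrt_pow2. nra. }
    rewrite Hq in Hp.
    assert (Hp2 : is_RInt (fun x => / (4 + s ^ 2 - 4 * s * cos x)) 0 (2 * PI) (2 * PI / (4 - s ^ 2))).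
    { apply Hp. split; nra. }
    apply (is_RInt_scal _ _ _ ((4 - s ^ 2) / 4)) in Hp2.
    pose proof (is_RInt_const (V := R_NormedModule) 0 (2 * PI) (1 / 4)) as Hc.
    pose proof (is_RInt_plus _ _ _ _ _ _ Hc Hp2) as Hs2.
    assert (Hv : plus (scal (2 * PI - 0) (1 / 4)) (scal ((4 - s ^ 2) / 4) (2 * PI / (4 - s ^ 2))) = PI).
    { unfold plus, scal; simpl. unfold mult; simpl. field. nra. }
    rewrite <- Hv at 2.
    eapply is_RInt_ext; [|exact Hs2].
    intros x _. unfold plus, scal; simpl. unfold mult; simpl.
    pose proof (Y_pos s x Hs). unfold Y in *. field. lra. }
  replace PI with (RInt (fun x => (2 - s * cos x) / Y s x) 0 (2 * PI)) by (apply is_RInt_unique; exact HP).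
  unfold G. apply RInt_le.
  - pose proof PI_RGT_0; lra.
  - exists PI; exact HP.
  - apply g_exRInt; exact Hs.
  - intros x _. pose proof (Y_pos s x Hs).
    set (q := sqrt (Y s x)).
    assert (Hq : 0 < q) by (apply sqrt_lt_R0; lra).
    assert (Hqq : q * q = Y s x) by (apply sqrt_sqrt; lra).
    destruct (Rle_dec (2 - s * cos x) 0).
    + apply Rle_trans with 0.
      * unfold Rdiv. apply Rmult_le_0_r; [lra|]. left; apply Rinv_0_lt_compat; lra.
      * left; apply Rinv_0_lt_compat; lra.
    + assert (Hle : 2 - s * cos x <= q).
      { pose proof (sin2_cos2 x). unfold Rsqr in *. unfold Y in Hqq. nra. }
      rewrite <- Hqq. apply Rmult_le_reg_r with (q * q). nra.
      field_simplify; nra.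
Qed.

Lemma G_0 : G 0 = PI.
Proof.
  unfold G. rewrite (RInt_ext _ (fun _ => / 2)).
  - rewrite RInt_const. unfold scal; simpl; unfold mult; simpl. field.
  - intros x _. unfold Y. replace (4 + 0 ^ 2 - 4 * 0 * cos x) with (2 * 2) by ring.
    rewrite sqrt_square; lra.
Qed.

Lemma h_pos m y : m < 1 -> 0 < 1 - m * sin y ^ 2.
Proof.
  intros Hm. pose proof (sin2_cos2 y). unfold Rsqr in *.
  assert (0 <= sin y ^ 2 <= 1) by nra.
  destruct (Rle_dec m 0); nra.
Qed.

Lemma h_cont m y : m < 1 -> continuous (fun t => / sqrt (1 - m * sin t ^ 2)) y.
Proof.
  intros Hm. pose proof (h_pos m y Hm).
  apply (ex_derive_continuous (fun t => / sqrt (1 - m * sin t ^ 2))).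
  auto_derive. split; [nra|]. split; [|exact I].
  apply Rgt_not_eq. apply sqrt_lt_R0. nra.
Qed.

Lemma h_exRInt m a b : m < 1 -> ex_RInt (fun t => / sqrt (1 - m * sin t ^ 2)) a b.
Proof. intros Hm. apply (ex_RInt_continuous (V := R_CompleteNormedModule)). intros; apply h_cont; auto. Qed.

Lemma EllK_sym m : m < 1 ->
  RInt (fun t => / sqrt (1 - m * sin t ^ 2)) (- (PI / 2)) (PI / 2) = 2 * EllK m.
Proof.
  intros Hm. set (h := fun t => / sqrt (1 - m * sin t ^ 2)).
  rewrite <- (RInt_Chasles h (- (PI / 2)) 0 (PI / 2)); try apply h_exRInt; auto.
  assert (E : RInt h (- (PI / 2)) 0 = RInt h 0 (PI / 2)).
  { pose proof (RInt_comp_lin h (-1) 0 (PI / 2) 0) as Hc.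
    replace (-1 * (PI / 2) + 0) with (- (PI / 2)) in Hc by ring.
    replace (-1 * 0 + 0) with 0 in Hc by ring.
    rewrite <- Hc by (apply h_exRInt; auto).
    rewrite (RInt_ext _ (fun y => opp (h y))).
    - rewrite (RInt_opp (V := R_CompleteNormedModule) h) by (apply h_exRInt; auto).
      rewrite (opp_RInt_swap (V := R_CompleteNormedModule)) by (apply h_exRInt; auto). reflexivity.
    - intros x _. unfold h. replace (-1 * x + 0) with (- x) by ring.
      rewrite sin_neg. unfold scal, opp; simpl; unfold mult; simpl. 
      replace (- sin x * (- sin x * 1)) with (sin x * (sin x * 1)) by ring. ring. }
  rewrite E. unfold EllK, h, plus; simpl. ring.
Qed.

Lemma G_K s : -2 < s < 2 -> G s = 4 / (2 + s) * EllK (8 * s / (2 + s) ^ 2).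
Proof.
  intros Hs. set (m := 8 * s / (2 + s) ^ 2).
  assert (Hm : m < 1).
  { unfold m. apply Rmult_lt_reg_r with ((2 + s) ^ 2). nra.
    field_simplify; [|lra]. nra. }
  unfold G.
  pose proof (RInt_comp_lin (fun x => / sqrt (Y s x)) 2 PI (- (PI / 2)) (PI / 2)) as Hc.
  replace (2 * - (PI / 2) + PI) with 0 in Hc by field.
  replace (2 * (PI / 2) + PI) with (2 * PI) in Hc by field.
  rewrite <- Hc by (apply g_exRInt; auto).
  rewrite (RInt_ext _ (fun y => scal (2 / (2 + s)) (/ sqrt (1 - m * sin y ^ 2)))).
  - rewrite (RInt_scal (V := R_CompleteNormedModule)) by (apply h_exRInt; auto).
    rewrite EllK_sym by auto. unfold scal; simpl; unfold mult; simpl. field. lra.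
  - intros x _. unfold scal; simpl; unfold mult; simpl.
    pose proof (h_pos m x Hm).
    assert (EY : Y s (2 * x + PI) = (2 + s) ^ 2 * (1 - m * sin x ^ 2)).
    { unfold Y, m. rewrite neg_cos, cos_2a_sin. field. lra. }
    rewrite EY, sqrt_mult_alt by nra. rewrite sqrt_pow2 by lra.
    assert (0 < sqrt (1 - m * sin x ^ 2)) by (apply sqrt_lt_R0; lra).
    replace (sin x * (sin x * 1)) with (sin x ^ 2) by ring. field. split; lra.
Qed.

Definition Mf (D t : R) := (D + 1) ^ 2 + 1 - 2 * (D + 1) * cos t.
Definition Pf (D t : R) := 1 - 2 * (D - 1) * cos t + (D - 1) ^ 2.

Lemma Mf_pos D t : 0 < D -> 0 < Mf D t.
Proof. intros. unfold Mf. pose proof (COS_bound t). nra. Qed.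

Lemma Pf_pos D t : 0 < D < 2 -> 0 < Pf D t.
Proof. intros. unfold Pf. apply den2_pos. lra. Qed.

Lemma Y_mob D t : 0 < D < 2 ->
  Y (2 - D ^ 2) (mob (D - 1) t) = (1 - (D - 1) ^ 2) ^ 2 * Mf D t / Pf D t.
Proof.
  intros HD. pose proof (Pf_pos D t HD). unfold Pf in *.
  unfold Y. rewrite cos_mob by lra. unfold Mf. field. lra.
Qed.

Lemma pos_sq_eq a b : 0 < a -> 0 < b -> a * a = b * b -> a = b.
Proof. intros. nra. Qed.

Lemma change_var D : 0 < D < 2 ->
  RInt (fun t => / sqrt (Mf D t * Pf D t)) 0 (2 * PI) = G (2 - D ^ 2).
Proof.
  intros HD. assert (Hs : -2 < 2 - D ^ 2 < 2) by nra.
  assert (Hb : -1 < D - 1 < 1) by lra.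
  unfold G.
  rewrite <- (mob_0 (D - 1)) at 2. rewrite <- (mob_2PI (D - 1)) at 2.
  rewrite <- (RInt_comp (fun x => / sqrt (Y (2 - D ^ 2) x)) (mob (D - 1)) (dmob (D - 1))).
  - apply RInt_ext. intros t _.
    unfold scal; simpl; unfold mult; simpl.
    pose proof (Mf_pos D t ltac:(lra)). pose proof (Pf_pos D t HD).
    replace (D * (D * 1)) with (D ^ 2) by ring. rewrite Y_mob by exact HD.
    assert (Hk : 0 < (1 - (D - 1) ^ 2) ^ 2 * Mf D t / Pf D t).
    { apply Rdiv_lt_0_compat; [|lra]. apply Rmult_lt_0_compat; [apply pow_lt; nra|lra]. }
    pose proof (sqrt_lt_R0 _ Hk) as Hq1.
    pose proof (sqrt_sqrt _ (Rlt_le _ _ Hk)) as Hq1'.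
    assert (Hmp : 0 < Mf D t * Pf D t) by nra.
    pose proof (sqrt_lt_R0 _ Hmp) as Hq2.
    pose proof (sqrt_sqrt _ (Rlt_le _ _ Hmp)) as Hq2'.
    unfold dmob. fold (Pf D t).
    apply pos_sq_eq.
    + apply Rinv_0_lt_compat; lra.
    + apply Rmult_lt_0_compat; [apply Rdiv_lt_0_compat; nra|]. apply Rinv_0_lt_compat; lra.
    + set (q1 := sqrt ((1 - (D - 1) ^ 2) ^ 2 * Mf D t / Pf D t)) in *.
      set (q2 := sqrt (Mf D t * Pf D t)) in *.
      replace ((1 - (D - 1) ^ 2) / Pf D t * / q1 * ((1 - (D - 1) ^ 2) / Pf D t * / q1))
        with ((1 - (D - 1) ^ 2) ^ 2 / (Pf D t) ^ 2 / (q1 * q1)) by (field; lra).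
      replace (/ q2 * / q2) with (/ (q2 * q2)) by (field; lra).
      rewrite Hq1', Hq2'. field. split; [lra|]. split; [lra|nra].
  - intros x _. apply g_cont. exact Hs.
  - intros x _. split.
    + apply mob_derive; exact Hb.
    + apply dmob_cont; exact Hb.
Qed.

Lemma sqd D t p :
  sqdist3 (gamma1 t) (gamma2 D p) =
  (2 - 2 * D * cos t + D ^ 2) - 2 * (cos t - D) * cos p.
Proof.
  unfold sqdist3, gamma1, gamma2. pose proof (sin2_cos2 t). pose proof (sin2_cos2 p).
  unfold Rsqr in *. nra.
Qed.

Lemma inner D t : 0 < D < 2 ->
  RInt (fun p => / sqdist3 (gamma1 t) (gamma2 D p)) 0 (2 * PI) =
  2 * PI * / sqrt (Mf D t * Pf D t).
Proof.
  intros HD. pose proof (Mf_pos D t ltac:(lra)). pose proof (Pf_pos D t HD).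
  rewrite (RInt_ext _ (fun p => / ((2 - 2 * D * cos t + D ^ 2) - 2 * (cos t - D) * cos p))).
  2:{ intros x _. rewrite sqd. reflexivity. }
  apply is_RInt_unique.
  replace (Mf D t * Pf D t) with ((2 - 2 * D * cos t + D ^ 2) ^ 2 - (2 * (cos t - D)) ^ 2)
    by (unfold Mf, Pf; ring).
  apply poisson. unfold Mf, Pf in *. split; nra.
Qed.

Lemma Ec_G D : 0 < D < 2 -> Ec D = 4 * PI * G (2 - D ^ 2).
Proof.
  intros HD. unfold Ec.
  rewrite (RInt_ext _ (fun t => scal (2 * PI) (/ sqrt (Mf D t * Pf D t)))).
  2:{ intros x _. rewrite inner by exact HD. reflexivity. }
  rewrite (RInt_scal (V := R_CompleteNormedModule)).
  - rewrite change_var by exact HD. unfold scal; simpl; unfold mult; simpl. ring.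
  - apply (ex_RInt_continuous (V := R_CompleteNormedModule)). intros z _.
    pose proof (Mf_pos D z ltac:(lra)). pose proof (Pf_pos D z HD).
    apply (ex_derive_continuous (fun t => / sqrt (Mf D t * Pf D t))).
    unfold Mf, Pf in *. auto_derive. split; [nra|]. split; [|exact I].
    apply Rgt_not_eq. apply sqrt_lt_R0. nra.
Qed.

Theorem mainTheorem1 :
  (forall D : R, 0 < D < 2 ->
     - (8 * (D ^ 2 - 2)) / (D ^ 2 - 4) ^ 2 < 1 /\
     Ec D = 16 * PI / (4 - D ^ 2) * EllK (- (8 * (D ^ 2 - 2)) / (D ^ 2 - 4) ^ 2)) /\
  (forall D : R, 0 < D < 2 -> Ec (sqrt 2) <= Ec D) /\
  Ec (sqrt 2) = 4 * PI ^ 2.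
Proof.
  assert (Hs2 : sqrt 2 ^ 2 = 2) by (simpl; rewrite Rmult_1_r; apply sqrt_sqrt; lra).
  assert (Hs0 : 0 < sqrt 2 < 2).
  { split. apply sqrt_lt_R0; lra. pose proof (sqrt_pos 2). nra. }
  assert (Ec2 : Ec (sqrt 2) = 4 * PI ^ 2).
  { rewrite Ec_G by exact Hs0. rewrite Hs2. replace (2 - 2) with 0 by ring.
    rewrite G_0. ring. }
  split; [|split].
  - intros D HD. split.
    + assert (0 < (D ^ 2 - 4) ^ 2) by (replace ((D ^ 2 - 4) ^ 2) with ((4 - D ^ 2) ^ 2) by ring; apply pow_lt; nra).
      apply Rmult_lt_reg_r with ((D ^ 2 - 4) ^ 2); [lra|].
      field_simplify; [|nra]. assert (0 < D ^ 4) by (apply pow_lt; lra). lra.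
    + rewrite Ec_G by exact HD. rewrite G_K by nra.
      replace (8 * (2 - D ^ 2) / (2 + (2 - D ^ 2)) ^ 2) with (- (8 * (D ^ 2 - 2)) / (D ^ 2 - 4) ^ 2)
        by (field; nra).
      field. nra.
  - intros D HD. rewrite Ec2, Ec_G by exact HD.
    pose proof (G_ge (2 - D ^ 2) ltac:(nra)). pose proof PI_RGT_0. nra.
  - exact Ec2.
Qed.
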